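(* Let $B\in\mathbb R^{n\times n}$ be symmetrizable and let $S=\mathrm{diag}(s_1,\dots,s_n)$ be positive definite. Order the (real) eigenvalues of $B$, $BS$, $SB$ and $S^{1/2}BS^{1/2}$ nondecreasingly. Then for every $k\in\{1,\dots,n\}$ there exists $\theta_k\in[\min_i s_i,\max_i s_i]$ such that $$\lambda_k(BS)=\lambda_k(SB)=\lambda_k(S^{1/2}BS^{1/2})=\theta_k\lambda_k(B).$$
   Context: A matrix $B\in\mathbb R^{n\times n}$ is (diagonally) symmetrizable if $DB$ is symmetric for some diagonal matrix $D$ with positive diagonal entries. $S^{1/2}$ denotes the diagonal positive definite square root of $S$. *)

(* Defs.v *)
From HB Require Import structures.
From mathcomp Require Import all_boot all_order all_algebra.
From mathcomp Require Import reals.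
Set Implicit Arguments. Unset Strict Implicit. Unset Printing Implicit Defensive.
Import Order.TTheory GRing.Theory Num.Theory.
Local Open Scope ring_scope.

Definition symmetrizable (R : realType) (n : nat) (B : 'M[R]_n) : Prop :=
  exists d : 'rV[R]_n, (forall i, 0 < d 0 i) /\
    (diag_mx d *m B)^T = diag_mx d *m B.

(* [l] is the list of eigenvalues of A (with algebraic multiplicity), all
   real, ordered nondecreasingly: the characteristic polynomial of A splits
   over R with roots l, and l is sorted. Such an l is unique when it exists. *)
Definition sorted_spectrum (R : realType) (n : nat) (A : 'M[R]_n) (l : seq R)
  : Prop :=
  sorted <=%R l /\ char_poly A = \prod_(x <- l) ('X - x%:P).

Definition sqrt_diag (R : realType) (n : nat) (s : 'rV[R]_n) : 'M[R]_n :=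
  diag_mx (map_mx Num.sqrt s).

(* Main.v *)
Require Import Defs.
From HB Require Import structures.
From mathcomp Require Import all_boot all_order all_algebra.
From mathcomp Require Import reals.
From mathcomp Require Import complex.
From mathcomp Require Import ring lra.
Set Implicit Arguments. Unset Strict Implicit. Unset Printing Implicit Defensive.
Import Order.TTheory GRing.Theory Num.Theory Num.Def.
Local Open Scope ring_scope.

Lemma char_poly_conj (F : comUnitRingType) n (P A : 'M[F]_n) :
  P \in unitmx -> char_poly (invmx P *m A *m P) = char_poly A.
Proof.
move=> Pu; rewrite /char_poly.
have -> : char_poly_mx (invmx P *m A *m P) =
   map_mx polyC (invmx P) *m char_poly_mx A *m map_mx polyC P.
  rewrite /char_poly_mx mulmxBr mulmxBl !map_mxM; congr (_ - _).
  by rewrite scalar_mxC -mulmxA -map_mxM mulVmx // map_mx1 mulmx1.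
rewrite !det_mulmx !det_map_mx mulrC mulrA -rmorphM det_inv.
by rewrite mulrV ?unitmxE // rmorph1 mul1r.
Qed.

Section Cx.
Variable R : realType.
Local Notation Cx := (R[i]).
Local Notation toC := (real_complex R).

Definition qf n (M : 'M[Cx]_n) (u : 'rV[Cx]_n) : Cx :=
  (u *m M *m (map_mx conjC u)^T) 0 0.

Definition spec n (M Q : 'M[Cx]_n) (e : 'rV[R]_n) :=
  Q \is unitarymx /\ M = invmx Q *m diag_mx (map_mx toC e) *m Q.

Definition negS n (e : 'rV[R]_n) : {set 'I_n} := [set j | e 0 j < 0].

Lemma qf_diag n (e : 'rV[R]_n) u :
  qf (diag_mx (map_mx toC e)) u = \sum_j toC (e 0 j) * (u 0 j * (u 0 j)^*).
Proof.
rewrite /qf mul_mx_diag !mxE; apply: eq_bigr => j _.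
by rewrite !mxE mulrA [_ * toC (e 0 j)]mulrC.
Qed.

Lemma unitary_inv n (Q : 'M[Cx]_n) : Q \is unitarymx ->
  Q \in unitmx /\ invmx Q = (map_mx conjC Q)^T.
Proof.
move=> Qu; split; first exact: unitarymx_unit.
by rewrite invmx_unitary // map_trmx.
Qed.

Lemma qf_mul n (M P : 'M[Cx]_n) u :
  qf M (u *m P) = qf (P *m M *m (map_mx conjC P)^T) u.
Proof.
by rewrite /qf map_mxM trmx_mul !mulmxA.
Qed.

Lemma qf_spec n (M Q : 'M[Cx]_n) e u : spec M Q e ->
  qf M u = qf (diag_mx (map_mx toC e)) (u *m (map_mx conjC Q)^T).
Proof.
move=> [Qu ->]; rewrite qf_mul; have [_ ->] := unitary_inv Qu.
congr qf; congr (_ *m _); apply/matrixP => i j; by rewrite !mxE ?conjCK.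
Qed.

Definition Psel n (S : {set 'I_n}) : 'M[Cx]_(#|S|, n) :=
  \matrix_(k, j) ((j == enum_val k)%:R).

Lemma Psel_tr n (S : {set 'I_n}) : Psel S *m (Psel S)^T = 1%:M.
Proof.
apply/matrixP => k k'; rewrite !mxE.
rewrite (bigD1 (enum_val k)) //= big1 ?addr0.
  rewrite !mxE eqxx mul1r (inj_eq enum_val_inj) eq_sym.
  by case: (k' == k).
by move=> j /negbTE jk; rewrite !mxE jk mul0r.
Qed.

Lemma rank_Psel n (S : {set 'I_n}) : \rank (Psel S) = #|S|.
Proof.
apply/eqP; rewrite eqn_leq rank_leq_row /=.
have := mxrankM_maxl (Psel S) (Psel S)^T.
by rewrite Psel_tr mxrank1.
Qed.

Lemma mulPsel n (S : {set 'I_n}) (w : 'rV[Cx]_#|S|) j :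
  j \notin S -> (w *m Psel S) 0 j = 0.
Proof.
move=> jS; rewrite !mxE big1 // => k _; rewrite !mxE.
case: eqP => [jk|]; last by rewrite mulr0.
by case/negP: jS; rewrite jk enum_valP.
Qed.

Lemma mulPselT n (S : {set 'I_n}) (v : 'rV[Cx]_n) k :
  (v *m (Psel S)^T) 0 k = v 0 (enum_val k).
Proof.
rewrite !mxE (bigD1 (enum_val k)) //= big1 ?addr0.
  by rewrite !mxE eqxx mulr1.
by move=> j /negbTE jk; rewrite !mxE jk mulr0.
Qed.

Lemma nrm_ge0 (z : Cx) : 0 <= z * z^*.
Proof. exact: mul_conjC_ge0. Qed.

Lemma KL2 n (M Q : 'M[Cx]_n) e : spec M Q e ->
  exists U : 'M[Cx]_(#|negS e|, n), \rank U = #|negS e| /\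
    forall u, (u <= U)%MS -> u != 0 -> qf M u < 0.
Proof.
move=> sp; have [Qu [Qunit QiE]] := (sp.1, unitary_inv sp.1).
exists (Psel (negS e) *m Q); split.
  by rewrite mxrankMfree ?rank_Psel // row_free_unit.
move=> u /submxP [w ->] unz; rewrite (qf_spec _ sp) qf_diag.
set v := _ *m _ *m _.
have vE : v = w *m Psel (negS e).
  by rewrite /v -QiE -(mulmxA w) -mulmxA mulmxV // mulmx1.
have vnz : v != 0.
  apply: contra unz; rewrite vE => /eqP v0.
  by rewrite mulmxA v0 mul0mx.
have [j vj] : exists j, v 0 j != 0.
  case: (pickP (fun j => v 0 j != 0)) => [j vj|H]; first by exists j.
  case/negP: vnz; apply/eqP/rowP => j.
  by move: (H j) => /= /negbFE/eqP ->; rewrite mxE.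
have jS : j \in negS e.
  by apply: contraR vj => jS; rewrite vE mulPsel.
rewrite (bigD1 j) //=.
have hj : toC (e 0 j) * (v 0 j * (v 0 j)^*) < 0.
  rewrite nmulr_rlt0; last by rewrite ltcR; move: jS; rewrite inE.
  by rewrite lt_def mul_conjC_eq0 vj nrm_ge0.
apply: (le_lt_trans (y := toC (e 0 j) * (v 0 j * (v 0 j)^*) + 0)); last first.
  by rewrite addr0.
rewrite lerD2l; apply: sumr_le0 => i _.
have [iS|iS] := boolP (i \in negS e).
  by rewrite nmulr_rle0 ?nrm_ge0 // ltcR; move: iS; rewrite inE.
by rewrite vE mulPsel // mul0r mulr0.
Qed.

Lemma KL1 n (M Q : 'M[Cx]_n) e p (U : 'M[Cx]_(p, n)) : spec M Q e ->
  (forall u, (u <= U)%MS -> u != 0 -> qf M u < 0) -> (\rank U <= #|negS e|)%N.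
Proof.
move=> sp Uneg; have [Qu [Qunit QiE]] := (sp.1, unitary_inv sp.1).
rewrite leqNgt; apply/negP => ltU.
set Ub := row_base U.
set K := (map_mx conjC Q)^T *m (Psel (negS e))^T.
set Y := Ub *m K.
have kerNZ : kermx Y != 0.
  rewrite -mxrank_eq0 mxrank_ker subn_eq0 -ltnNge.
  by apply: leq_ltn_trans (rank_leq_col Y) ltU.
set w := nz_row (kermx Y).
have wnz : w != 0 by rewrite /w nz_row_eq0.
have wY : w *m Y = 0 by apply/sub_kermxP; exact: nz_row_sub.
set u := w *m Ub.
have unz : u != 0 by rewrite /u mulmx_free_eq0 ?row_base_free.
have uU : (u <= U)%MS.
  by rewrite /u (submx_trans (submxMl _ _)) // eq_row_base.
have := Uneg u uU unz; rewrite (qf_spec _ sp) qf_diag.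
set v := u *m _.
have vS : forall j, j \in negS e -> v 0 j = 0.
  have vK : v *m (Psel (negS e))^T = 0.
    have uK : u *m K = 0 by rewrite /u -mulmxA.
    by move: uK; rewrite /K mulmxA.
  move=> j jS; move/matrixP/(_ 0 (enum_rank_in jS j)): vK.
  by rewrite mulPselT enum_rankK_in // => ->; rewrite mxE.
move=> /lt_geF; rewrite sumr_ge0 // => j _; have [jS|jS] := boolP (j \in negS e).
  by rewrite vS // mul0r mulr0.
rewrite mulr_ge0 ?nrm_ge0 // ler0c; move: jS; rewrite inE.
by rewrite -leNgt.
Qed.

Lemma transfer n (M Q M' Q' P : 'M[Cx]_n) e e' : spec M Q e -> spec M' Q' e' ->
  P \in unitmx -> (forall u, qf M (u *m P) <= qf M' u) ->
  (#|negS e'| <= #|negS e|)%N.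
Proof.
move=> sp sp' Pu H.
have [U' [rU' U'neg]] := KL2 sp'.
have := KL1 (U := U' *m P) sp.
rewrite mxrankMfree ?row_free_unit // rU'; apply => u uU unz.
have uE : u = (u *m invmx P) *m P by rewrite mulmxKV.
rewrite uE; apply: (le_lt_trans (H _)); apply: U'neg.
  by rewrite -[U'](mulmxK Pu) submxMr.
by apply: contra unz => /eqP u0; rewrite uE u0 mul0mx.
Qed.

Lemma conj_toC (x : R) : (toC x)^* = toC x.
Proof. by apply: conj_Creal; rewrite complex_real. Qed.

Lemma map_conj_toC m p (P : 'M[R]_(m, p)) : map_mx conjC (map_mx toC P) = map_mx toC P.
Proof. by apply/matrixP => i j; rewrite !mxE conj_toC. Qed.

Lemma qf_mulR n (M P : 'M[R]_n) u :
  qf (map_mx toC M) (u *m map_mx toC P) = qf (map_mx toC (P *m M *m P^T)) u.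
Proof. by rewrite qf_mul map_conj_toC !map_mxM map_trmx. Qed.

Lemma spec_ex n (M : 'M[R]_n) : M^T = M ->
  exists Q e, spec (map_mx toC M) Q e.
Proof.
move=> MT.
have herm : map_mx toC M \is hermsymmx.
  rewrite is_hermitianmxE expr0 scale1r; apply/eqP/matrixP => i j.
  by rewrite !mxE conj_toC -{1}MT mxE.
have := hermitian_spectral_diag_real herm.
have /orthomx_spectralP Me := hermitian_normalmx herm.
set sp := spectral_diag _ => spR.
exists (spectralmx (map_mx toC M)), (map_mx (fun z : R[i] => complex.Re z) sp); split.
  exact: spectral_unitarymx.
have -> : map_mx toC (map_mx (fun z : R[i] => complex.Re z) sp) = sp.
  apply/matrixP => i j.
  by rewrite !mxE RRe_real //; move/mxOverP: spR; apply.
exact: Me.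
Qed.

Lemma spec_shift n (M : 'M[R]_n) Q e x : spec (map_mx toC M) Q e ->
  spec (map_mx toC (M - diag_mx (const_mx x))) Q (e - const_mx x).
Proof.
move=> [Qu ME]; split; first by [].
have Qunit := unitarymx_unit Qu.
have -> : diag_mx (map_mx toC (e - const_mx x)) =
    diag_mx (map_mx toC e) - (toC x)%:M.
  by apply/matrixP => i j; rewrite !mxE rmorphB mulrnBl.
rewrite map_mxB ME mulmxBr mulmxBl; congr (_ - _).
rewrite diag_const_mx map_scalar_mx.
by rewrite scalar_mxC -mulmxA mulVmx // mulmx1.
Qed.

Definition spl n (e : 'rV[R]_n) : seq R := [seq e 0 i | i <- enum 'I_n].

Lemma card_negS_shift n (e : 'rV[R]_n) x :
  #|negS (e - const_mx x)| = count (fun y => y < x) (spl e).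
Proof.
rewrite /negS cardsE cardE size_filter /spl count_map -enumT.
apply: eq_count => j; rewrite /= unfold_in /= !mxE; exact: subr_lt0.
Qed.

Lemma qfB n (M1 M2 : 'M[Cx]_n) u : qf (M1 - M2) u = qf M1 u - qf M2 u.
Proof. by rewrite /qf mulmxBr mulmxBl !mxE. Qed.

Lemma qf_cmp n (G : 'M[R]_n) (c d : 'rV[R]_n) u :
  (forall j, d 0 j <= c 0 j) ->
  qf (map_mx toC (G - diag_mx c)) u <= qf (map_mx toC (G - diag_mx d)) u.
Proof.
move=> dc; rewrite !map_mxB !qfB lerD2l lerN2 !map_diag_mx !qf_diag.
apply: ler_sum => j _; apply: ler_wpM2r; first exact: nrm_ge0.
by rewrite lecR.
Qed.

Lemma cnt_le n (G H : 'M[R]_n) Q e Q' e' (a : 'rV[R]_n) (x y : R) :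
  spec (map_mx toC G) Q e -> spec (map_mx toC H) Q' e' ->
  (forall j, a 0 j != 0) -> diag_mx a *m G *m diag_mx a = H ->
  (forall j, y <= a 0 j ^+ 2 * x) ->
  (count (fun z => (z < y)%R) (spl e') <= count (fun z => (z < x)%R) (spl e))%N.
Proof.
move=> spG spH anz HE yx; rewrite -!card_negS_shift.
apply: (transfer (P := map_mx toC (diag_mx a)) (spec_shift x spG)
   (spec_shift y spH)).
  rewrite unitmxE det_map_mx det_diag unitfE fmorph_eq0; apply/prodf_neq0 => j _.
  exact: anz.
move=> u; rewrite qf_mulR tr_diag_mx mulmxBr mulmxBl HE !mulmx_diag.
apply: qf_cmp => j; rewrite !mxE.
by rewrite mulrAC -expr2.
Qed.

Lemma spec_charpoly n (M : 'M[R]_n) Q e : spec (map_mx toC M) Q e ->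
  char_poly M = \prod_(x <- sort <=%R (spl e)) ('X - x%:P).
Proof.
move=> [Qu ME]; have Qunit := unitarymx_unit Qu.
apply: (@map_poly_inj _ _ toC); rewrite map_char_poly ME char_poly_conj //.
rewrite char_poly_trig ?diag_mx_is_trig // rmorph_prod.
rewrite (perm_big _ (permEl (perm_sort _ _))) /spl big_map big_enum /=.
by apply: eq_bigr => i _; rewrite map_polyXsubC !mxE eqxx mulr1n.
Qed.

End Cx.

Section Sorted.
Variable R : realType.

Definition cnt (l : seq R) (x : R) : nat := count (fun z => z < x) l.

Lemma S1 (l : seq R) k : sorted <=%R l -> (k < size l)%N -> (cnt l l`_k <= k)%N.
Proof.
move=> sl kl; rewrite /cnt -[l in count _ l](cat_take_drop k l) count_cat.
have -> : count (fun z => z < l`_k) (drop k l) = 0%N.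
  apply/eqP; rewrite -leqn0 leqNgt -has_count; apply/hasPn => y /(nthP 0) [i ilt <-].
  rewrite nth_drop -leNgt; apply: (sorted_leq_nth le_trans lexx 0 sl).
  - by rewrite inE.
  - by rewrite inE -ltn_subRL -size_drop.
  - exact: leq_addr.
rewrite addn0; apply: leq_trans (count_size _ _) _.
by rewrite size_take kl.
Qed.

Lemma S2 (l : seq R) k x : sorted <=%R l -> (k < size l)%N -> l`_k < x ->
  (k < cnt l x)%N.
Proof.
move=> sl kl lx; rewrite /cnt -(cat_take_drop k.+1 l) count_cat.
apply: leq_trans (leq_addr _ _).
have -> : count (fun z => z < x) (take k.+1 l) = size (take k.+1 l).
  apply/eqP; rewrite -all_count; apply/allP => y /(nthP 0) [i ilt <-].
  move: ilt; rewrite size_takel // => ilt.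
  rewrite nth_take //; apply: le_lt_trans lx.
  apply: (sorted_leq_nth le_trans lexx 0 sl).
  - by rewrite inE (leq_trans ilt).
  - by rewrite inE.
  - by rewrite -ltnS.
by rewrite size_takel.
Qed.

Lemma S3 (l : seq R) x y : x <= y -> (cnt l x <= cnt l y)%N.
Proof. by move=> xy; apply: sub_count => z /= zx; apply: lt_le_trans xy. Qed.

Lemma ostro (a c : seq R) (smin smax : R) k :
  0 < smin -> smin <= smax -> sorted <=%R a -> sorted <=%R c ->
  (k < size a)%N -> (k < size c)%N ->
  (forall x : R, 0 <= x -> (cnt c (x / smax) <= cnt a x)%N) ->
  (forall x : R, 0 <= x -> (cnt a x <= cnt c (x / smin))%N) ->
  (forall x : R, x <= 0 -> (cnt c (x / smin) <= cnt a x)%N) ->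
  (forall x : R, x <= 0 -> (cnt a x <= cnt c (x / smax))%N) ->
  exists theta, [/\ smin <= theta, theta <= smax & a`_k = theta * c`_k].
Proof.
move=> smin0 sminmax sa sc ka kc H1 H2 H3 H4.
have smax0 : 0 < smax by apply: lt_le_trans sminmax.
set g := c`_k; set b := a`_k.
have Ca := S1 sa ka; have Cc := S1 sc kc.
have contra1 : forall x, b < x -> (cnt a x <= k)%N -> False.
  by move=> x bx; rewrite leqNgt (S2 sa ka bx).
have contra2 : forall x, g < x -> (cnt c x <= k)%N -> False.
  by move=> x gx; rewrite leqNgt (S2 sc kc gx).
have [g0|g0|g0] := ltgtP g 0.
-
  have lo : smax * g <= b.
    rewrite leNgt; apply/negP => bx; apply: (contra1 _ bx).
    apply: leq_trans (H4 _ _) _; first by rewrite pmulr_rle0 // ltW.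
    by rewrite mulrAC divff ?gt_eqF // mul1r.
  have hi : b <= smin * g.
    rewrite leNgt; apply/negP => bx.
    have [b0|b0] := leP b 0.
      apply: (contra2 (b / smin)); first by rewrite ltr_pdivlMr // mulrC.
      by apply: leq_trans (H3 _ b0) Ca.
    pose x := smin * g / 2.
    have x0 : x <= 0.
      by rewrite /x pmulr_lle0 ?invr_gt0 // pmulr_rle0 // ltW.
    apply: (contra2 (x / smin)).
      have -> : x / smin = g / 2 by rewrite /x; field; rewrite gt_eqF.
      lra.
    apply: leq_trans (H3 _ x0) _; apply: leq_trans (S3 a (ltW (le_lt_trans x0 b0))) Ca.
  exists (b / g); split.
  + by rewrite ler_ndivlMr.
  + by rewrite ler_ndivrMr.
  + by rewrite mulrVK // unitfE lt_eqF.
-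
  have lo : smin * g <= b.
    rewrite leNgt; apply/negP => bx; apply: (contra1 _ bx).
    apply: leq_trans (H2 _ _) _; first by rewrite mulr_ge0 // ltW.
    by rewrite mulrAC divff ?gt_eqF // mul1r.
  have hi : b <= smax * g.
    rewrite leNgt; apply/negP => bx.
    have b0 : 0 <= b by apply: le_trans (ltW bx); rewrite mulr_ge0 // ltW.
    apply: (contra2 (b / smax)); first by rewrite ltr_pdivlMr // mulrC.
    by apply: leq_trans (H1 _ b0) Ca.
  exists (b / g); split.
  + by rewrite ler_pdivlMr.
  + by rewrite ler_pdivrMr.
  + by rewrite mulrVK // unitfE gt_eqF.
-
  have lo : 0 <= b.
    rewrite leNgt; apply/negP => bx; apply: (contra1 _ bx).
    apply: leq_trans (H2 _ (lexx 0)) _.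
    by rewrite mul0r -g0.
  have hi : b <= 0.
    rewrite leNgt; apply/negP => bx.
    apply: (contra2 (b / smax)); first by rewrite g0 divr_gt0.
    by apply: leq_trans (H1 _ (ltW bx)) Ca.
  exists smin; split => //.
  by rewrite g0 mulr0; apply/eqP; rewrite eq_le hi lo.
Qed.

End Sorted.

Section Main.
Variable R : realType.

Lemma invmx_eq n (X Y : 'M[R]_n) : X *m Y = 1%:M -> invmx Y = X.
Proof.
move=> XY; have [_ Yu] := mulmx1_unit XY.
by rewrite -[LHS]mul1mx -XY -mulmxA mulmxV // mulmx1.
Qed.

Lemma char_sim n (X Y M : 'M[R]_n) : X *m Y = 1%:M ->
  char_poly (X *m M *m Y) = char_poly M.
Proof.
move=> XY; have [_ Yu] := mulmx1_unit XY.
by rewrite -(invmx_eq XY) char_poly_conj.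
Qed.

Lemma diag_map2 n (f g : R -> R) (v : 'rV[R]_n) :
  diag_mx (map_mx f v) *m diag_mx (map_mx g v) =
  diag_mx (map_mx (fun y => f y * g y) v).
Proof. by rewrite mulmx_diag; congr diag_mx; apply/rowP => j; rewrite !mxE. Qed.

Lemma diag_inv n (f g : R -> R) (v : 'rV[R]_n) :
  (forall j, f (v 0 j) * g (v 0 j) = 1) ->
  diag_mx (map_mx f v) *m diag_mx (map_mx g v) = 1%:M.
Proof.
move=> fg; rewrite diag_map2 -diag_const_mx; congr diag_mx.
by apply/rowP => j; rewrite !mxE fg.
Qed.

Lemma sqrt_inv (y : R) : 0 < y -> Num.sqrt y * (Num.sqrt y)^-1 = 1.
Proof. by move=> y0; rewrite divff // gt_eqF // sqrtr_gt0. Qed.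

Lemma sqrt_inv' (y : R) : 0 < y -> (Num.sqrt y)^-1 * Num.sqrt y = 1.
Proof. by move=> y0; rewrite mulrC sqrt_inv. Qed.

Lemma La (x m M : R) : 0 <= x -> 0 < m -> m <= M -> x / M <= m^-1 * x.
Proof.
move=> x0 m0 mM; rewrite [x / M]mulrC; apply: (ler_wpM2r x0).
by rewrite lef_pV2 // posrE // (lt_le_trans m0 mM).
Qed.

Lemma Lb (x m M : R) : 0 <= x -> 0 < m -> m <= M -> x <= M * (x / m).
Proof. by move=> x0 m0 mM; rewrite mulrA ler_pdivlMr //; nra. Qed.

Lemma Lc (x m M : R) : x <= 0 -> 0 < m -> m <= M -> x / m <= M^-1 * x.
Proof.
move=> x0 m0 mM; rewrite [x / m]mulrC; apply: (ler_wnM2r x0).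
by rewrite lef_pV2 // posrE // (lt_le_trans m0 mM).
Qed.

Lemma Ld (x m M : R) : x <= 0 -> 0 < m -> m <= M -> x <= m * (x / M).
Proof.
move=> x0 m0 mM; have M0 := lt_le_trans m0 mM.
by rewrite mulrA ler_pdivlMr //; nra.
Qed.

End Main.

Theorem lemma5 (R : realType) (n : nat) (B : 'M[R]_n) (s : 'rV[R]_n) :
  symmetrizable B ->
  (forall i, 0 < s 0 i) ->
  exists lB lBS lSB lSBS : seq R,
    [/\ sorted_spectrum B lB,
        sorted_spectrum (B *m diag_mx s) lBS,
        sorted_spectrum (diag_mx s *m B) lSB,
        sorted_spectrum (sqrt_diag s *m B *m sqrt_diag s) lSBS &
        forall k : 'I_n, exists theta : R,
          [/\ \big[Num.min/s 0 k]_(i < n) s 0 i <= theta,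
              theta <= \big[Num.max/s 0 k]_(i < n) s 0 i,
              lBS`_k = lSB`_k, lSB`_k = lSBS`_k &
              lSBS`_k = theta * lB`_k]].
Proof.
move=> [d [dpos dsym]] spos.
pose fi := fun y : R => (Num.sqrt y)^-1.
pose E := diag_mx (map_mx Num.sqrt d); pose Ei := diag_mx (map_mx fi d).
pose T := diag_mx (map_mx Num.sqrt s); pose Ti := diag_mx (map_mx fi s).
have EEi : E *m Ei = 1%:M by apply: diag_inv => j; apply: sqrt_inv.
have EiE : Ei *m E = 1%:M by apply: diag_inv => j; apply: sqrt_inv'.
have TTi : T *m Ti = 1%:M by apply: diag_inv => j; apply: sqrt_inv.
have TiT : Ti *m T = 1%:M by apply: diag_inv => j; apply: sqrt_inv'.
have sqrE (v : 'rV[R]_n) : (forall j, 0 < v 0 j) ->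
    diag_mx (map_mx Num.sqrt v) *m diag_mx (map_mx Num.sqrt v) = diag_mx v.
  move=> vpos; rewrite diag_map2; congr diag_mx; apply/rowP => j.
  by rewrite !mxE -expr2 sqr_sqrtr // ltW.
have sE : diag_mx s = T *m T by rewrite sqrE.
have dE : diag_mx d = E *m E by rewrite sqrE.
pose C := E *m B *m Ei.
pose A := T *m C *m T.
have BD : B^T *m diag_mx d = diag_mx d *m B.
  by rewrite -[RHS]dsym trmx_mul tr_diag_mx.
have Csym : C^T = C.
  rewrite /C !trmx_mul !tr_diag_mx -/E -/Ei.
  transitivity (Ei *m (B^T *m (E *m E)) *m Ei).
    by rewrite !mulmxA -(mulmxA _ E Ei) EEi mulmx1.
  by rewrite -dE BD dE !mulmxA EiE mul1mx.
have Asym : A^T = A.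
  have tT : T^T = T by rewrite tr_diag_mx.
  by rewrite /A (trmx_mul (T *m C) T) (trmx_mul T C) Csym tT mulmxA.
have [QC [eC spC]] := spec_ex Csym.
have [QA [eA spA]] := spec_ex Asym.
have charB : char_poly B = char_poly C by rewrite /C char_sim.
have TE : T *m E = E *m T by rewrite diag_mxC.
have TEi : Ti *m Ei = Ei *m Ti by rewrite diag_mxC.
have EiT : Ei *m T = T *m Ei by rewrite diag_mxC.
have charTBT : char_poly (T *m B *m T) = char_poly A.
  rewrite -(char_sim _ EEi) /A /C !mulmxA TE.
  by rewrite -(mulmxA _ Ei T) EiT mulmxA.
pose lC := sort <=%R (spl eC); pose lA := sort <=%R (spl eA).
have sortA : sorted <=%R lA by apply: sort_sorted; apply: le_total.
have sortC : sorted <=%R lC by apply: sort_sorted; apply: le_total.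
have specA : forall X : 'M[R]_n, char_poly X = char_poly A -> sorted_spectrum X lA.
  by move=> X XA; split => //; rewrite XA; apply: spec_charpoly spA.
exists lC, lA, lA, lA; split.
- by split => //; rewrite charB; apply: spec_charpoly spC.
- apply: specA; rewrite -charTBT sE -(char_sim (T *m B *m T) TiT).
  by congr char_poly; rewrite !mulmxA TiT mul1mx.
- apply: specA; rewrite -charTBT sE -(char_sim (T *m B *m T) TTi).
  by congr char_poly; rewrite !mulmxA -(mulmxA _ T Ti) TTi mulmx1.
- by apply: specA; exact: charTBT.
move=> k.
have AE : A = T *m C *m T by [].
clearbody A C.
set smin := \big[minr/s 0 k]_(i < n) s 0 i.
set smax := \big[maxr/s 0 k]_(i < n) s 0 i.
have sminle j : smin <= s 0 j by rewrite /smin (bigD1 j) //= ge_min lexx.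
have smaxge j : s 0 j <= smax by rewrite /smax (bigD1 j) //= le_max lexx.
have smin0 : 0 < smin.
  by apply: (big_ind (fun x => 0 < x)) => // x y x0 y0; rewrite lt_min x0.
have sminmax : smin <= smax := le_trans (sminle k) (smaxge k).
have sz (e : 'rV[R]_n) : size (sort <=%R (spl e)) = n.
  by rewrite size_sort size_map size_enum_ord.
have cP (e : 'rV[R]_n) x : cnt (sort <=%R (spl e)) x =
    count (fun z => (z < x)%R) (spl e).
  exact: (permP (permEl (perm_sort _ _))).
have finz j : map_mx fi s 0 j != 0.
  by rewrite mxE /fi invr_eq0 gt_eqF // sqrtr_gt0.
have sqnz j : map_mx Num.sqrt s 0 j != 0.
  by rewrite mxE gt_eqF // sqrtr_gt0.
have TiATi : diag_mx (map_mx fi s) *m A *m diag_mx (map_mx fi s) = C.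
  by rewrite -/Ti AE !mulmxA TiT mul1mx -mulmxA TTi mulmx1.
have fi2 j : map_mx fi s 0 j ^+ 2 = (s 0 j)^-1.
  by rewrite mxE /fi exprVn sqr_sqrtr // ltW.
have sq2 j : map_mx Num.sqrt s 0 j ^+ 2 = s 0 j.
  by rewrite mxE sqr_sqrtr // ltW.
have [||||||theta [h1 h2 h3]] := @ostro R lA lC smin smax k smin0 sminmax sortA sortC.
- by rewrite sz.
- by rewrite sz.
- move=> x x0; rewrite !cP; apply: (cnt_le spA spC finz TiATi) => j.
  by rewrite fi2 La.
- move=> x x0; rewrite !cP; apply: (cnt_le spC spA sqnz (esym AE)) => j.
  by rewrite sq2 Lb.
- move=> x x0; rewrite !cP; apply: (cnt_le spA spC finz TiATi) => j.
  by rewrite fi2 Lc.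
- move=> x x0; rewrite !cP; apply: (cnt_le spC spA sqnz (esym AE)) => j.
  by rewrite sq2 Ld.
by exists theta; split.
Qed.
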